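(* Let $k$ be a field, $U$ a three-dimensional $k$-vector space, and $\phi_3\in D_3U^*$. Assume (a) either the characteristic of $k$ is not two, or the characteristic of $k$ is two but $\phi_3\neq x^*y^*z^*$ for every basis $x^*,y^*,z^*$ of $U^*$; and (b) $\ell\phi_3\neq0$ for every nonzero $\ell\in U$. Then $\Gamma_{\phi_3}:D_3U\otimes\bigwedge^3U\to\bigwedge^3U^*$ is not identically zero.
   Context: $U^*=\operatorname{Hom}_k(U,k)$, $D_iU^*=\operatorname{Hom}_k(\operatorname{Sym}_iU,k)$; $D_\bullet U^*$ is the divided power algebra, a module over $\operatorname{Sym}_\bullet U$ via $(uv)(u')=v(uu')$. For a basis $x,y,z$ of $U$ with dual basis $x^*,y^*,z^*$, $x^*y^*z^*$ is the element of $D_3U^*$ taking value $1$ on $xyz$ and $0$ on all other cubic monomials. $D_3U$ is the degree-$3$ divided power of $U$; for $X\in D_3U$, $\Delta(X)\in U^{\otimes3}$ is its comultiplication (for $X=\ell_1^{(e_1)}\cdots\ell_s^{(e_s)}$ with $\sum e_j=3$, the sum of all distinct words $u_1\otimes u_2\otimes u_3$ in which the symbol $\ell_j$ occurs exactly $e_j$ times, extended linearly). $\Gamma_{\phi_3}(X\otimes y_1\wedge y_2\wedge y_3)=\sum(u_1y_1\phi_3)\wedge(u_2y_2\phi_3)\wedge(u_3y_3\phi_3)$, summed over the terms of $\Delta(X)$, with $u_iy_i\in\operatorname{Sym}_2U$ acting on $\phi_3$ to give elements of $U^*$. *)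

(* Defs.v *)
(* U := k^3 as row vectors 'rV[k]_3 with standard basis
   e_0 = x, e_1 = y, e_2 = z. *)
From HB Require Import structures.
From mathcomp Require Import all_boot all_order all_algebra.
Set Implicit Arguments. Unset Strict Implicit. Unset Printing Implicit Defensive.
Import Order.TTheory GRing.Theory Num.Theory.
Local Open Scope ring_scope.

(* Exponent of e_m in the cubic monomial e_i e_j e_l (or in the word
   e_i ⊗ e_j ⊗ e_l). *)
Definition cnt (i j l m : 'I_3) : nat := ((i == m) + (j == m) + (l == m))%N.

(* An element of D_3 U^* = Hom(Sym_3 U, k) is given by its values
   phi a b c = phi(x^a y^b z^c) on the cubic monomials (a+b+c = 3; other
   entries are never read).  Similarly an element X of D_3 U is given by its
   coefficients X a b c on the divided-power monomials x^(a) y^(b) z^(c). *)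
Definition DUdual3 (k : fieldType) := nat -> nat -> nat -> k.
Definition DU3 (k : fieldType) := nat -> nat -> nat -> k.

(* phi(u v w) for u v w in U (product in Sym_3 U). *)
Definition eval3 (k : fieldType) (phi : DUdual3 k) (u v w : 'rV[k]_3) : k :=
  \sum_(i < 3) \sum_(j < 3) \sum_(l < 3)
     u 0 i * v 0 j * w 0 l *
     phi (cnt i j l 0) (cnt i j l 1) (cnt i j l 2).

(* l phi in D_2 U^*, given by its values on the quadratic monomials
   x^a y^b z^c (a+b+c = 2): (l phi)(q) = phi(l q). *)
Definition contract1 (k : fieldType) (phi : DUdual3 k) (l : 'rV[k]_3)
  (a b c : nat) : k :=
  l 0 0 * phi a.+1 b c + l 0 1 * phi a b.+1 c + l 0 2 * phi a b c.+1.

(* (u y) phi in U^*, as a row vector of its values on e_0, e_1, e_2. *)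
Definition contract2 (k : fieldType) (phi : DUdual3 k) (u y : 'rV[k]_3)
  : 'rV[k]_3 := \row_m eval3 phi u y (delta_mx 0 m).

(* phi = x^* y^* z^* for the basis x^*,y^*,z^* of U^* given by the rows of
   Bs (invertible): with x, y, z the dual basis of U (rows of (Bs^-1)^T),
   phi takes value 1 on xyz and 0 on every other cubic monomial in x,y,z. *)
Definition is_xyz_star (k : fieldType) (phi : DUdual3 k) (Bs : 'M[k]_3) : Prop :=
  forall i j l : 'I_3,
    eval3 phi (row i (invmx Bs)^T) (row j (invmx Bs)^T) (row l (invmx Bs)^T)
    = if [&& i != j, j != l & i != l] then 1 else 0.

(* Gamma_phi(X ⊗ y1∧y2∧y3), with /\^3 U^* identified with k via the
   determinant: a∧b∧c |-> det[a;b;c].  Delta(X) = sum over words (i,j,l) of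
   X(exponents of the word) e_i⊗e_j⊗e_l. *)
Definition wedge3 (k : fieldType) (a b c : 'rV[k]_3) : k :=
  \det (\matrix_(r < 3, s < 3)
    (if r == 0 :> nat then a 0 s else if r == 1 :> nat then b 0 s else c 0 s)).

Definition Gamma (k : fieldType) (phi : DUdual3 k) (X : DU3 k)
  (y1 y2 y3 : 'rV[k]_3) : k :=
  \sum_(i < 3) \sum_(j < 3) \sum_(l < 3)
     X (cnt i j l 0) (cnt i j l 1) (cnt i j l 2) *
     wedge3 (contract2 phi (delta_mx 0 i) y1)
            (contract2 phi (delta_mx 0 j) y2)
            (contract2 phi (delta_mx 0 l) y3).

(* Main.v *)
Require Import Defs.
From mathcomp Require Import all_boot all_order all_algebra ring.
From Stdlib Require Import Classical.
Import GRing.Theory.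
Set Implicit Arguments. Unset Strict Implicit.
Local Open Scope ring_scope.


Definition o0 : 'I_3 := @Ordinal 3 0 isT.
Definition o1 : 'I_3 := @Ordinal 3 1 isT.
Definition o2 : 'I_3 := @Ordinal 3 2 isT.

Lemma sum3 (R : nmodType) (F : 'I_3 -> R) : \sum_(i < 3) F i = F o0 + F o1 + F o2.
Proof. by rewrite !big_ord_recr big_ord0 /= add0r; congr (F _ + F _ + F _); apply/val_inj. Qed.

Lemma det3 (R : comRingType) (A : 'M[R]_3) : \det A =
  A o0 o0 * (A o1 o1 * A o2 o2 - A o1 o2 * A o2 o1)
  - A o0 o1 * (A o1 o0 * A o2 o2 - A o1 o2 * A o2 o0)
  + A o0 o2 * (A o1 o0 * A o2 o1 - A o1 o1 * A o2 o0).
Proof.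
have [f Ef] : exists f : nat -> nat -> R, forall i j, A i j = f i j.
  by exists (fun n m => A (inord n) (inord m)) => i j; rewrite !inord_val.
rewrite (expand_det_row _ o0) sum3 /cofactor.
rewrite !(expand_det_row _ 0) !big_ord_recr !big_ord0 /= /cofactor !det_mx11 !mxE !Ef /=.
ring.
Qed.

Lemma ord3P (P : 'I_3 -> Prop) : P o0 -> P o1 -> P o2 -> forall i, P i.
Proof.
move=> H0 H1 H2 [[|[|[|i]]] Hi] //.
- by have -> : Ordinal Hi = o0 by apply/val_inj.
- by have -> : Ordinal Hi = o1 by apply/val_inj.
- by have -> : Ordinal Hi = o2 by apply/val_inj.
Qed.

Lemma eval3E (k : fieldType) (phi : DUdual3 k) u v w : eval3 phi u v w =
  u 0 o0 * v 0 o0 * w 0 o0 * phi 3%N 0%N 0%N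
  + u 0 o0 * v 0 o0 * w 0 o1 * phi 2%N 1%N 0%N
  + u 0 o0 * v 0 o0 * w 0 o2 * phi 2%N 0%N 1%N
  + u 0 o0 * v 0 o1 * w 0 o0 * phi 2%N 1%N 0%N
  + u 0 o0 * v 0 o1 * w 0 o1 * phi 1%N 2%N 0%N
  + u 0 o0 * v 0 o1 * w 0 o2 * phi 1%N 1%N 1%N
  + u 0 o0 * v 0 o2 * w 0 o0 * phi 2%N 0%N 1%N
  + u 0 o0 * v 0 o2 * w 0 o1 * phi 1%N 1%N 1%N
  + u 0 o0 * v 0 o2 * w 0 o2 * phi 1%N 0%N 2%N
  + u 0 o1 * v 0 o0 * w 0 o0 * phi 2%N 1%N 0%N
  + u 0 o1 * v 0 o0 * w 0 o1 * phi 1%N 2%N 0%N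
  + u 0 o1 * v 0 o0 * w 0 o2 * phi 1%N 1%N 1%N
  + u 0 o1 * v 0 o1 * w 0 o0 * phi 1%N 2%N 0%N
  + u 0 o1 * v 0 o1 * w 0 o1 * phi 0%N 3%N 0%N
  + u 0 o1 * v 0 o1 * w 0 o2 * phi 0%N 2%N 1%N
  + u 0 o1 * v 0 o2 * w 0 o0 * phi 1%N 1%N 1%N
  + u 0 o1 * v 0 o2 * w 0 o1 * phi 0%N 2%N 1%N
  + u 0 o1 * v 0 o2 * w 0 o2 * phi 0%N 1%N 2%N
  + u 0 o2 * v 0 o0 * w 0 o0 * phi 2%N 0%N 1%N
  + u 0 o2 * v 0 o0 * w 0 o1 * phi 1%N 1%N 1%N
  + u 0 o2 * v 0 o0 * w 0 o2 * phi 1%N 0%N 2%N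
  + u 0 o2 * v 0 o1 * w 0 o0 * phi 1%N 1%N 1%N
  + u 0 o2 * v 0 o1 * w 0 o1 * phi 0%N 2%N 1%N
  + u 0 o2 * v 0 o1 * w 0 o2 * phi 0%N 1%N 2%N
  + u 0 o2 * v 0 o2 * w 0 o0 * phi 1%N 0%N 2%N
  + u 0 o2 * v 0 o2 * w 0 o1 * phi 0%N 1%N 2%N
  + u 0 o2 * v 0 o2 * w 0 o2 * phi 0%N 0%N 3%N.
Proof. by rewrite /eval3 !sum3 /cnt /= !addrA. Qed.


Definition Mphi (k : fieldType) (phi : DUdual3 k) (u : 'rV[k]_3) : 'M[k]_3 :=
  \matrix_(j, l) eval3 phi u (delta_mx 0 j) (delta_mx 0 l).

Lemma M00 (k : fieldType) (phi : DUdual3 k) u : Mphi phi u o0 o0 = u 0 o0 * phi 3%N 0%N 0%N + u 0 o1 * phi 2%N 1%N 0%N + u 0 o2 * phi 2%N 0%N 1%N.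
Proof. rewrite mxE eval3E !mxE /=. ring. Qed.
Lemma M01 (k : fieldType) (phi : DUdual3 k) u : Mphi phi u o0 o1 = u 0 o0 * phi 2%N 1%N 0%N + u 0 o1 * phi 1%N 2%N 0%N + u 0 o2 * phi 1%N 1%N 1%N.
Proof. rewrite mxE eval3E !mxE /=. ring. Qed.
Lemma M02 (k : fieldType) (phi : DUdual3 k) u : Mphi phi u o0 o2 = u 0 o0 * phi 2%N 0%N 1%N + u 0 o1 * phi 1%N 1%N 1%N + u 0 o2 * phi 1%N 0%N 2%N.
Proof. rewrite mxE eval3E !mxE /=. ring. Qed.
Lemma M10 (k : fieldType) (phi : DUdual3 k) u : Mphi phi u o1 o0 = u 0 o0 * phi 2%N 1%N 0%N + u 0 o1 * phi 1%N 2%N 0%N + u 0 o2 * phi 1%N 1%N 1%N.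
Proof. rewrite mxE eval3E !mxE /=. ring. Qed.
Lemma M11 (k : fieldType) (phi : DUdual3 k) u : Mphi phi u o1 o1 = u 0 o0 * phi 1%N 2%N 0%N + u 0 o1 * phi 0%N 3%N 0%N + u 0 o2 * phi 0%N 2%N 1%N.
Proof. rewrite mxE eval3E !mxE /=. ring. Qed.
Lemma M12 (k : fieldType) (phi : DUdual3 k) u : Mphi phi u o1 o2 = u 0 o0 * phi 1%N 1%N 1%N + u 0 o1 * phi 0%N 2%N 1%N + u 0 o2 * phi 0%N 1%N 2%N.
Proof. rewrite mxE eval3E !mxE /=. ring. Qed.
Lemma M20 (k : fieldType) (phi : DUdual3 k) u : Mphi phi u o2 o0 = u 0 o0 * phi 2%N 0%N 1%N + u 0 o1 * phi 1%N 1%N 1%N + u 0 o2 * phi 1%N 0%N 2%N.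
Proof. rewrite mxE eval3E !mxE /=. ring. Qed.
Lemma M21 (k : fieldType) (phi : DUdual3 k) u : Mphi phi u o2 o1 = u 0 o0 * phi 1%N 1%N 1%N + u 0 o1 * phi 0%N 2%N 1%N + u 0 o2 * phi 0%N 1%N 2%N.
Proof. rewrite mxE eval3E !mxE /=. ring. Qed.
Lemma M22 (k : fieldType) (phi : DUdual3 k) u : Mphi phi u o2 o2 = u 0 o0 * phi 1%N 0%N 2%N + u 0 o1 * phi 0%N 1%N 2%N + u 0 o2 * phi 0%N 0%N 3%N.
Proof. rewrite mxE eval3E !mxE /=. ring. Qed.
Definition MphiE := (M00, M01, M02, M10, M11, M12, M20, M21, M22).


Lemma ord3_cases (i : 'I_3) : [\/ i = o0, i = o1 | i = o2].
Proof.
case: i => [[|[|[|i]]] Hi] //; [apply: Or31|apply: Or32|apply: Or33]; exact: val_inj.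
Qed.

Lemma eval3_d (k : fieldType) (phi : DUdual3 k) i j l :
  eval3 phi (delta_mx 0 i) (delta_mx 0 j) (delta_mx 0 l) =
  phi (cnt i j l 0) (cnt i j l 1) (cnt i j l 2).
Proof.
by case: (ord3_cases i) => ->; case: (ord3_cases j) => ->; case: (ord3_cases l) => ->;
  rewrite eval3E !mxE /cnt /=; ring.
Qed.

Definition e_ (k : fieldType) (i : 'I_3) : 'rV[k]_3 := delta_mx 0 i.

Lemma Mphi_d (k : fieldType) (phi : DUdual3 k) i r s :
  Mphi phi (delta_mx 0 i) r s = phi (cnt i r s 0) (cnt i r s 1) (cnt i r s 2).
Proof. by rewrite mxE eval3_d. Qed.

Lemma contract2_row (k : fieldType) (phi : DUdual3 k) u r :
  contract2 phi u (delta_mx 0 r) = row r (Mphi phi u).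
Proof. by apply/rowP => s; rewrite !mxE. Qed.

Lemma wedge3_rows (k : fieldType) (A B C : 'M[k]_3) :
  wedge3 (row o0 A) (row o1 B) (row o2 C) =
  A o0 o0 * (B o1 o1 * C o2 o2 - B o1 o2 * C o2 o1)
  - A o0 o1 * (B o1 o0 * C o2 o2 - B o1 o2 * C o2 o0)
  + A o0 o2 * (B o1 o0 * C o2 o1 - B o1 o1 * C o2 o0).
Proof. by rewrite /wedge3 det3 !mxE. Qed.

Ltac nsimp := rewrite ?(add0n, addn0, add1n, addn1).

Lemma Gamma_det (k : fieldType) (phi : DUdual3 k) (u : 'rV[k]_3) :
  Gamma phi (fun a b c => u 0 o0 ^+ a * u 0 o1 ^+ b * u 0 o2 ^+ c)
    (delta_mx 0 o0) (delta_mx 0 o1) (delta_mx 0 o2) = \det (Mphi phi u).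
Proof.
rewrite /Gamma !sum3 !contract2_row !wedge3_rows !Mphi_d /cnt /=; nsimp.
rewrite det3 !MphiE.
ring.
Qed.



Definition d3 (R : comRingType) (a00 a01 a02 a10 a11 a12 a20 a21 a22 : R) : R :=
  a00 * (a11 * a22 - a12 * a21) - a01 * (a10 * a22 - a12 * a20)
  + a02 * (a10 * a21 - a11 * a20).

Definition Qf (R : comRingType) (A C : 'M[R]_3) : R :=
  d3 (C o0 o0) (C o0 o1) (C o0 o2) (A o1 o0) (A o1 o1) (A o1 o2) (A o2 o0) (A o2 o1) (A o2 o2)
  + d3 (A o0 o0) (A o0 o1) (A o0 o2) (C o1 o0) (C o1 o1) (C o1 o2) (A o2 o0) (A o2 o1) (A o2 o2)
  + d3 (A o0 o0) (A o0 o1) (A o0 o2) (A o1 o0) (A o1 o1) (A o1 o2) (C o2 o0) (C o2 o1) (C o2 o2).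

Definition XQ (k : fieldType) (u v : 'rV[k]_3) : DU3 k := fun a b c =>
  a%:R * v 0 o0 * u 0 o0 ^+ a.-1 * u 0 o1 ^+ b * u 0 o2 ^+ c
  + b%:R * v 0 o1 * u 0 o0 ^+ a * u 0 o1 ^+ b.-1 * u 0 o2 ^+ c
  + c%:R * v 0 o2 * u 0 o0 ^+ a * u 0 o1 ^+ b * u 0 o2 ^+ c.-1.

Lemma Gamma_Q (k : fieldType) (phi : DUdual3 k) (u v : 'rV[k]_3) :
  Gamma phi (XQ u v) (delta_mx 0 o0) (delta_mx 0 o1) (delta_mx 0 o2) =
  Qf (Mphi phi u) (Mphi phi v).
Proof.
rewrite /Gamma !sum3 !contract2_row !wedge3_rows !Mphi_d /cnt /XQ /=; nsimp.
rewrite /Qf /d3 !MphiE.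
ring.
Qed.

Definition DP (k : fieldType) (A C : 'M[k]_3) : {poly k} :=
  \det (map_mx polyC A + 'X *: map_mx polyC C).

Lemma DP_expand (k : fieldType) (A C : 'M[k]_3) :
  DP A C = (\det A)%:P + 'X * (Qf A C)%:P + 'X^2 * (Qf C A)%:P + 'X^3 * (\det C)%:P.
Proof.
rewrite /DP !det3 /Qf /d3 !mxE.
rewrite !(polyCD, polyCN, polyCM, polyCB).
ring.
Qed.

Lemma DP_cong (k : fieldType) (B A C : 'M[k]_3) :
  DP (B *m A *m B^T) (B *m C *m B^T) = (\det B ^+ 2)%:P * DP A C.
Proof.
rewrite /DP.
have -> : map_mx polyC (B *m A *m B^T) + 'X *: map_mx polyC (B *m C *m B^T) =
  map_mx polyC B *m (map_mx polyC A + 'X *: map_mx polyC C) *m (map_mx polyC B)^T.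
  by rewrite !map_mxM map_trmx mulmxDr mulmxDl -scalemxAr -scalemxAl.
rewrite !det_mulmx det_tr !det_map_mx /=.
by rewrite expr2 polyCM; ring.
Qed.

Lemma coef1_0 (k : fieldType) (c0 c1 c2 c3 : k) :
  c0%:P + 'X * c1%:P + 'X^2 * c2%:P + 'X^3 * c3%:P = 0 -> c1 = 0.
Proof.
move/(congr1 (fun p : {poly k} => p`_1)).
by rewrite !coefD coefXM !coefXnM !coefC /= add0r !addr0.
Qed.


Definition trf (k : fieldType) (phi : DUdual3 k) (B : 'M[k]_3) : DUdual3 k :=
  fun a b c =>
  let T i j l := eval3 phi (row i B) (row j B) (row l B) in
  match a, b, c with
  | 3, 0, 0 => T o0 o0 o0 | 2, 1, 0 => T o0 o0 o1 | 2, 0, 1 => T o0 o0 o2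
  | 1, 2, 0 => T o0 o1 o1 | 1, 1, 1 => T o0 o1 o2 | 1, 0, 2 => T o0 o2 o2
  | 0, 3, 0 => T o1 o1 o1 | 0, 2, 1 => T o1 o1 o2 | 0, 1, 2 => T o1 o2 o2
  | 0, 0, 3 => T o2 o2 o2 | _, _, _ => 0 end.

Lemma trf_eval (k : fieldType) (phi : DUdual3 k) (B : 'M[k]_3) u v w :
  eval3 (trf phi B) u v w = eval3 phi (u *m B) (v *m B) (w *m B).
Proof.
rewrite !eval3E /trf /= !eval3E /row !mxE !sum3 ?mxE.
ring.
Qed.

Lemma eval3_lin (k : fieldType) (phi : DUdual3 k) (B : 'M[k]_3) x j l :
  eval3 phi x (row j B) (row l B) =
  \sum_(j' < 3) \sum_(l' < 3) B j j' * B l l' * Mphi phi x j' l'.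
Proof.
rewrite !sum3 !MphiE eval3E /row !mxE.
ring.
Qed.

Lemma Mphi_trf (k : fieldType) (phi : DUdual3 k) (B : 'M[k]_3) u :
  Mphi (trf phi B) u = B *m Mphi phi (u *m B) *m B^T.
Proof.
apply/matrixP => j l.
rewrite [LHS]mxE trf_eval -!rowE eval3_lin.
rewrite !mxE !sum3 !mxE !sum3 !mxE.
ring.
Qed.

Definition HD (k : fieldType) (phi : DUdual3 k) :=
  forall u v, \det (Mphi phi u) = 0 /\ Qf (Mphi phi u) (Mphi phi v) = 0.

Definition Hb (k : fieldType) (phi : DUdual3 k) :=
  forall l, Mphi phi l = 0 -> l = 0.

Lemma HD_trf (k : fieldType) (phi : DUdual3 k) (B : 'M[k]_3) :
  HD phi -> HD (trf phi B).
Proof.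
move=> H u v; split.
  by rewrite Mphi_trf !det_mulmx (H _ v).1 mulr0 mul0r.
have := DP_cong B (Mphi phi (u *m B)) (Mphi phi (v *m B)).
rewrite -!Mphi_trf (DP_expand (Mphi phi (u *m B))).
rewrite (H (u *m B) (v *m B)).1 (H (u *m B) (v *m B)).2 (H (v *m B) (u *m B)).1
  (H (v *m B) (u *m B)).2 !mulr0 !addr0 mulr0 DP_expand.
exact: coef1_0.
Qed.

Lemma Hb_trf (k : fieldType) (phi : DUdual3 k) (B : 'M[k]_3) :
  B \in unitmx -> Hb phi -> Hb (trf phi B).
Proof.
move=> uB H l; rewrite Mphi_trf => H0.
have uBt : B^T \in unitmx by rewrite unitmx_tr.
have : Mphi phi (l *m B) = 0.
  have E : Mphi phi (l *m B) = invmx B *m (B *m Mphi phi (l *m B) *m B^T) *m invmx B^T.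
    by rewrite !mulmxA mulVmx // mul1mx mulmxK.
  by rewrite E H0 mulmx0 mul0mx.
move/H => H1.
by rewrite -(mulmxK uB l) H1 mul0mx.
Qed.

Lemma eval3_sym12 (k : fieldType) (phi : DUdual3 k) u v w :
  eval3 phi u v w = eval3 phi v u w.
Proof. rewrite !eval3E; ring. Qed.

Lemma eval3_sym23 (k : fieldType) (phi : DUdual3 k) u v w :
  eval3 phi u v w = eval3 phi u w v.
Proof. rewrite !eval3E; ring. Qed.


Definition vec3 (k : fieldType) (a b c : k) : 'rV[k]_3 := \row_(i < 3) [:: a; b; c]`_i.

Definition cofm (k : fieldType) (A : 'M[k]_3) : 'M[k]_3 := \matrix_(i < 3, j < 3)
  match (i : nat), (j : nat) with
  | 0, 0 => A o1 o1 * A o2 o2 - A o1 o2 * A o1 o2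
  | 1, 1 => A o0 o0 * A o2 o2 - A o0 o2 * A o0 o2
  | 2, 2 => A o0 o0 * A o1 o1 - A o0 o1 * A o0 o1
  | 0, 1 | 1, 0 => A o0 o2 * A o1 o2 - A o0 o1 * A o2 o2
  | 0, 2 | 2, 0 => A o0 o1 * A o1 o2 - A o0 o2 * A o1 o1
  | _, _ => A o0 o1 * A o0 o2 - A o0 o0 * A o1 o2
  end.

Definition Sx (k : fieldType) (A N : 'M[k]_3) (j : 'I_3) : k :=
  match (j : nat) with
  | 0 => A o2 o2 * N o1 o1 + A o1 o1 * N o2 o2 - 2%:R * A o1 o2 * N o1 o2
  | 1 => A o2 o2 * N o0 o0 + A o0 o0 * N o2 o2 - 2%:R * A o0 o2 * N o0 o2
  | _ => A o1 o1 * N o0 o0 + A o0 o0 * N o1 o1 - 2%:R * A o0 o1 * N o0 o1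
  end.

Lemma rowij (k : fieldType) (A : 'M[k]_3) i j : row i A 0 j = A i j.
Proof. by rewrite mxE. Qed.

Definition symm (k : fieldType) (A : 'M[k]_3) := forall i j, A i j = A j i.

Lemma Mphi_sym (k : fieldType) (phi : DUdual3 k) u : symm (Mphi phi u).
Proof. by move=> i j; rewrite !mxE eval3_sym23. Qed.

Lemma wkey (k : fieldType) (A N : 'M[k]_3) j : symm A -> symm N ->
  \sum_(l < 3) \sum_(m < 3) cofm A j l * cofm A j m * N l m
  = cofm A j j * Qf A N - \det A * Sx A N j.
Proof.
move=> sA sN.
rewrite det3 /Qf /d3 (sA o1 o0) (sA o2 o0) (sA o2 o1) (sN o1 o0) (sN o2 o0) (sN o2 o1).
by case: (ord3_cases j) => ->; rewrite !sum3 !mxE /Sx /= (sN o1 o0) (sN o2 o0) (sN o2 o1); ring.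
Qed.

Lemma qform (k : fieldType) (phi : DUdual3 k) w v :
  eval3 phi w w v = \sum_(l < 3) \sum_(m < 3) w 0 l * w 0 m * Mphi phi v l m.
Proof. rewrite !sum3 !MphiE !eval3E; ring. Qed.

Lemma w0_from (k : fieldType) (phi : DUdual3 k) u j : HD phi ->
  cofm (Mphi phi u) j j != 0 ->
  exists w0 : 'rV[k]_3, w0 != 0 /\ forall v, eval3 phi w0 w0 v = 0.
Proof.
move=> H hj; exists (row j (cofm (Mphi phi u))); split.
  apply/eqP => /rowP/(_ j); rewrite rowij [RHS]mxE => h; by rewrite h eqxx in hj.
move=> v; rewrite qform.
have -> : \sum_(l < 3) \sum_(m < 3) row j (cofm (Mphi phi u)) 0 l *
    row j (cofm (Mphi phi u)) 0 m * Mphi phi v l m =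
  \sum_(l < 3) \sum_(m < 3) cofm (Mphi phi u) j l * cofm (Mphi phi u) j m * Mphi phi v l m.
  by rewrite !sum3 !rowij.
by rewrite wkey ?(H u v).1 ?(H u v).2 ?mulr0 ?mul0r ?subr0 //; apply: Mphi_sym.
Qed.

Lemma sq0 (k : fieldType) (x : k) : x * x = 0 -> x = 0.
Proof. by move/eqP; rewrite mulf_eq0 orbb => /eqP. Qed.

Lemma mul0l_nz (k : fieldType) (a x : k) : a != 0 -> a * x = 0 -> x = 0.
Proof. by move=> ha /eqP; rewrite mulf_eq0 (negbTE ha) => /eqP. Qed.

Lemma adj_zero (k : fieldType) (A : 'M[k]_3) : symm A -> \det A = 0 ->
  (forall j, cofm A j j = 0) -> forall i j, cofm A i j = 0.
Proof.
move=> sA hd hj.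
have J01 : cofm A o0 o0 * cofm A o1 o1 - cofm A o0 o1 * cofm A o0 o1 = \det A * A o2 o2.
  by rewrite det3 !mxE /= (sA o1 o0) (sA o2 o0) (sA o2 o1); ring.
have J02 : cofm A o0 o0 * cofm A o2 o2 - cofm A o0 o2 * cofm A o0 o2 = \det A * A o1 o1.
  by rewrite det3 !mxE /= (sA o1 o0) (sA o2 o0) (sA o2 o1); ring.
have J12 : cofm A o1 o1 * cofm A o2 o2 - cofm A o1 o2 * cofm A o1 o2 = \det A * A o0 o0.
  by rewrite det3 !mxE /= (sA o1 o0) (sA o2 o0) (sA o2 o1); ring.
move: J01; rewrite hd !mul0r !hj mul0r sub0r => /eqP; rewrite oppr_eq0 => /eqP/sq0 J01.
move: J02; rewrite hd !mul0r !hj mul0r sub0r => /eqP; rewrite oppr_eq0 => /eqP/sq0 J02.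
move: J12; rewrite hd !mul0r !hj mul0r sub0r => /eqP; rewrite oppr_eq0 => /eqP/sq0 J12.
move=> i j.
case: (ord3_cases i) => ->; case: (ord3_cases j) => -> //.
- by rewrite -J01 !mxE.
- by rewrite -J02 !mxE.
- by rewrite -J12 !mxE.
Qed.

Lemma rank1s (k : fieldType) (d e f g h i D E F G H I : k) :
  d * g - e * e = 0 -> d * i - f * f = 0 -> e * f - d * h = 0 ->
  D * G - E * E = 0 -> D * I - F * F = 0 -> E * F - D * H = 0 ->
  (d + D) * (g + G) - (e + E) * (e + E) = 0 ->
  (d + D) * (i + I) - (f + F) * (f + F) = 0 ->
  (e + E) * (f + F) - (d + D) * (h + H) = 0 ->
  d = 0 -> D != 0 -> [/\ e = 0, f = 0, g = 0, h = 0 & i = 0].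
Proof.
move=> x1 x2 x3 y1 y2 y3 s1 s2 s3 hd hD; subst d.
have he : e = 0 by apply: sq0; move: x1; rewrite mul0r sub0r => /eqP; rewrite oppr_eq0 => /eqP.
have hf : f = 0 by apply: sq0; move: x2; rewrite mul0r sub0r => /eqP; rewrite oppr_eq0 => /eqP.
subst e f.
have hg : D * g = 0.
  have -> : D * g = ((0 + D) * (g + G) - (0 + E) * (0 + E)) - (D * G - E * E) by ring.
  by rewrite s1 y1 subr0.
have hi : D * i = 0.
  have -> : D * i = ((0 + D) * (i + I) - (0 + F) * (0 + F)) - (D * I - F * F) by ring.
  by rewrite s2 y2 subr0.
have hh : D * h = 0.
  have -> : D * h = (E * F - D * H) - ((0 + E) * (0 + F) - (0 + D) * (h + H)) by ring.
  by rewrite s3 y3 subr0.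
by split => //; apply: (mul0l_nz hD).
Qed.

Lemma rank1_mat (k : fieldType) (X Y : 'M[k]_3) j : symm X -> symm Y ->
  (forall a b, cofm X a b = 0) -> (forall a b, cofm Y a b = 0) ->
  (forall a b, cofm (X + Y) a b = 0) -> X j j = 0 -> Y j j != 0 -> X = 0.
Proof.
move=> sX sY hX hY hS hd hD.
case: (ord3_cases j) hd hD => -> hd hD.
- have [] := rank1s (h := X o1 o2) (i := X o2 o2) (H := Y o1 o2) (I := Y o2 o2)
    (g := X o1 o1) (G := Y o1 o1) (e := X o0 o1) (E := Y o0 o1) (f := X o0 o2) (F := Y o0 o2)
    _ _ _ _ _ _ _ _ _ hd hD;
  try (by have := hX o2 o2; rewrite !mxE /= => <-; ring);
  try (by have := hX o1 o1; rewrite !mxE /= => <-; ring);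
  try (by have := hX o1 o2; rewrite !mxE /= => <-; ring);
  try (by have := hY o2 o2; rewrite !mxE /= => <-; ring);
  try (by have := hY o1 o1; rewrite !mxE /= => <-; ring);
  try (by have := hY o1 o2; rewrite !mxE /= => <-; ring);
  try (by have := hS o2 o2; rewrite !mxE /= => <-; ring);
  try (by have := hS o1 o1; rewrite !mxE /= => <-; ring);
  try (by have := hS o1 o2; rewrite !mxE /= => <-; ring).
  move=> h1 h2 h3 h4 h5; apply/matrixP => a b; rewrite [RHS]mxE.
  by case: (ord3_cases a) => ->; case: (ord3_cases b) => ->;
    rewrite ?h1 ?h2 ?h3 ?h4 ?h5 ?hd // sX ?h1 ?h2 ?h3 ?h4 ?h5.
- have [] := rank1s (h := X o0 o2) (i := X o2 o2) (H := Y o0 o2) (I := Y o2 o2)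
    (g := X o0 o0) (G := Y o0 o0) (e := X o0 o1) (E := Y o0 o1) (f := X o1 o2) (F := Y o1 o2)
    _ _ _ _ _ _ _ _ _ hd hD;
  try (by have := hX o2 o2; rewrite !mxE /= => <-; ring);
  try (by have := hX o0 o0; rewrite !mxE /= => <-; ring);
  try (by have := hX o0 o2; rewrite !mxE /= => <-; ring);
  try (by have := hY o2 o2; rewrite !mxE /= => <-; ring);
  try (by have := hY o0 o0; rewrite !mxE /= => <-; ring);
  try (by have := hY o0 o2; rewrite !mxE /= => <-; ring);
  try (by have := hS o2 o2; rewrite !mxE /= => <-; ring);
  try (by have := hS o0 o0; rewrite !mxE /= => <-; ring);
  try (by have := hS o0 o2; rewrite !mxE /= => <-; ring).
  move=> h1 h2 h3 h4 h5; apply/matrixP => a b; rewrite [RHS]mxE.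
  by case: (ord3_cases a) => ->; case: (ord3_cases b) => ->;
    rewrite ?h1 ?h2 ?h3 ?h4 ?h5 ?hd // sX ?h1 ?h2 ?h3 ?h4 ?h5.
- have [] := rank1s (h := X o0 o1) (i := X o1 o1) (H := Y o0 o1) (I := Y o1 o1)
    (g := X o0 o0) (G := Y o0 o0) (e := X o0 o2) (E := Y o0 o2) (f := X o1 o2) (F := Y o1 o2)
    _ _ _ _ _ _ _ _ _ hd hD;
  try (by have := hX o1 o1; rewrite !mxE /= => <-; ring);
  try (by have := hX o0 o0; rewrite !mxE /= => <-; ring);
  try (by have := hX o0 o1; rewrite !mxE /= => <-; ring);
  try (by have := hY o1 o1; rewrite !mxE /= => <-; ring);
  try (by have := hY o0 o0; rewrite !mxE /= => <-; ring);
  try (by have := hY o0 o1; rewrite !mxE /= => <-; ring);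
  try (by have := hS o1 o1; rewrite !mxE /= => <-; ring);
  try (by have := hS o0 o0; rewrite !mxE /= => <-; ring);
  try (by have := hS o0 o1; rewrite !mxE /= => <-; ring).
  move=> h1 h2 h3 h4 h5; apply/matrixP => a b; rewrite [RHS]mxE.
  by case: (ord3_cases a) => ->; case: (ord3_cases b) => ->;
    rewrite ?h1 ?h2 ?h3 ?h4 ?h5 ?hd // sX ?h1 ?h2 ?h3 ?h4 ?h5.
Qed.

Lemma Mphi_add (k : fieldType) (phi : DUdual3 k) u v :
  Mphi phi (u + v) = Mphi phi u + Mphi phi v.
Proof. apply/matrixP => i j; rewrite !mxE !eval3E !mxE; ring. Qed.

Lemma Mphi_lin (k : fieldType) (phi : DUdual3 k) u i j :
  Mphi phi u i j = u 0 o0 * Mphi phi (delta_mx 0 o0) i j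
    + u 0 o1 * Mphi phi (delta_mx 0 o1) i j + u 0 o2 * Mphi phi (delta_mx 0 o2) i j.
Proof. rewrite !mxE !eval3E !mxE /=; ring. Qed.

Lemma find_w0 (k : fieldType) (phi : DUdual3 k) : HD phi -> Hb phi ->
  exists w0 : 'rV[k]_3, w0 != 0 /\ forall v, eval3 phi w0 w0 v = 0.
Proof.
move=> H Hb; apply: NNPP => NW.
have D0 : forall u j, cofm (Mphi phi u) j j = 0.
  move=> u j; apply/eqP; apply/negPn/negP => hj; apply: NW; exact: (w0_from H hj).
have C0 : forall u a b, cofm (Mphi phi u) a b = 0.
  by move=> u; apply: adj_zero; [apply: Mphi_sym|exact: (H u u).1|exact: D0].
set Y := Mphi phi (delta_mx 0 o0).
have nz : forall j, Y j j != 0 -> False.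
  move=> j hj.
  pose l := vec3 (Mphi phi (delta_mx 0 o1) j j) (- Y j j) 0.
  have hX : Mphi phi l j j = 0 by rewrite Mphi_lin /l !mxE /=; ring.
  have hS : forall a b, cofm (Mphi phi l + Y) a b = 0.
    by move=> a b; rewrite /Y -Mphi_add; exact: C0.
  have := rank1_mat (Mphi_sym phi l) (Mphi_sym phi _) (C0 l) (C0 _) hS hX hj.
  move/Hb => hl0; have h1 : l 0 o1 = - Y j j by rewrite /l mxE.
  move: h1; rewrite hl0 [LHS]mxE => /esym/eqP.
  by rewrite oppr_eq0 (negbTE hj).
have y0 : Y o0 o0 = 0 by apply/eqP; apply/negPn/negP => /nz.
have y1 : Y o1 o1 = 0 by apply/eqP; apply/negPn/negP => /nz.
have y2 : Y o2 o2 = 0 by apply/eqP; apply/negPn/negP => /nz.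
have y01 : Y o0 o1 = 0.
  by apply: sq0; have := C0 (delta_mx 0 o0) o2 o2; rewrite mxE /= -/Y y0 y1 mul0r sub0r => /eqP; rewrite oppr_eq0 => /eqP.
have y02 : Y o0 o2 = 0.
  by apply: sq0; have := C0 (delta_mx 0 o0) o1 o1; rewrite mxE /= -/Y y0 y2 mul0r sub0r => /eqP; rewrite oppr_eq0 => /eqP.
have y12 : Y o1 o2 = 0.
  by apply: sq0; have := C0 (delta_mx 0 o0) o0 o0; rewrite mxE /= -/Y y1 y2 mul0r sub0r => /eqP; rewrite oppr_eq0 => /eqP.
have : Y = 0.
  have sY := Mphi_sym phi (delta_mx 0 o0); rewrite -/Y in sY.
  apply/matrixP => a b; rewrite [RHS]mxE.
  by case: (ord3_cases a) => ->; case: (ord3_cases b) => ->;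
    rewrite ?y0 ?y1 ?y2 ?y01 ?y02 ?y12 // sY ?y01 ?y02 ?y12.
move/Hb => /(congr1 (fun w : 'rV[k]_3 => w 0 o0)); rewrite !mxE /= => /eqP.
by rewrite oner_eq0.
Qed.


Lemma eq0_by (k : fieldType) (x y c : k) : y = 0 -> x = c * y -> x = 0.
Proof. by move=> -> ->; rewrite mulr0. Qed.

Definition rows3 (k : fieldType) (r0 r1 r2 : 'rV[k]_3) : 'M[k]_3 :=
  \matrix_(i < 3, j < 3) match (i : nat) with 0 => r0 0 j | 1 => r1 0 j | _ => r2 0 j end.

Lemma rows3_row0 (k : fieldType) (r0 r1 r2 : 'rV[k]_3) : row o0 (rows3 r0 r1 r2) = r0.
Proof. by apply/rowP => j; rewrite !mxE. Qed.
Lemma rows3_row1 (k : fieldType) (r0 r1 r2 : 'rV[k]_3) : row o1 (rows3 r0 r1 r2) = r1.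
Proof. by apply/rowP => j; rewrite !mxE. Qed.
Lemma rows3_row2 (k : fieldType) (r0 r1 r2 : 'rV[k]_3) : row o2 (rows3 r0 r1 r2) = r2.
Proof. by apply/rowP => j; rewrite !mxE. Qed.

Lemma rows3_unit (k : fieldType) (r0 r1 r2 : 'rV[k]_3) :
  d3 (r0 0 o0) (r0 0 o1) (r0 0 o2) (r1 0 o0) (r1 0 o1) (r1 0 o2) (r2 0 o0) (r2 0 o1) (r2 0 o2) != 0 ->
  rows3 r0 r1 r2 \in unitmx.
Proof. by rewrite unitmxE unitfE det3 !mxE /=. Qed.

Lemma frame (k : fieldType) (w0 : 'rV[k]_3) : w0 != 0 ->
  exists B : 'M[k]_3, B \in unitmx /\ row o2 B = w0.
Proof.
move=> nz.
case: (eqVneq (w0 0 o2) 0) => h2.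
  case: (eqVneq (w0 0 o1) 0) => h1.
    case: (eqVneq (w0 0 o0) 0) => h0.
      exfalso; move/eqP: nz; apply; apply/rowP => j; rewrite [RHS]mxE.
      by case: (ord3_cases j) => ->.
    exists (rows3 (delta_mx 0 o1) (delta_mx 0 o2) w0); split; last exact: rows3_row2.
    apply: rows3_unit; apply: contra h0 => /eqP h; apply/eqP; apply: (eq0_by (c := 1) h); rewrite /d3 !mxE /=; ring.
  exists (rows3 (delta_mx 0 o0) (delta_mx 0 o2) w0); split; last exact: rows3_row2.
  apply: rows3_unit; apply: contra h1 => /eqP h; apply/eqP; apply: (eq0_by (c := -1) h); rewrite /d3 !mxE /=; ring.
exists (rows3 (delta_mx 0 o0) (delta_mx 0 o1) w0); split; last exact: rows3_row2.
apply: rows3_unit; apply: contra h2 => /eqP h; apply/eqP; apply: (eq0_by (c := 1) h); rewrite /d3 !mxE /=; ring.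
Qed.

Definition frameP (k : fieldType) (phi : DUdual3 k) :=
  [/\ phi 0%N 0%N 3%N = 0, phi 1%N 0%N 2%N = 0 & phi 0%N 1%N 2%N = 0].

Lemma step3a (k : fieldType) (phi : DUdual3 k) : frameP phi -> HD phi ->
  phi 2%N 0%N 1%N * phi 0%N 2%N 1%N - phi 1%N 1%N 1%N * phi 1%N 1%N 1%N != 0 ->
  [/\ (2%:R : k) = 0, phi 1%N 1%N 1%N != 0,
      [/\ phi 3%N 0%N 0%N = 0, phi 0%N 3%N 0%N = 0, phi 2%N 1%N 0%N = 0 & phi 1%N 2%N 0%N = 0]
    & phi 2%N 0%N 1%N = 0 /\ phi 0%N 2%N 1%N = 0].
Proof.
case=> hc ht hw H hd.
have E1 : phi 2%N 0%N 1%N * (phi 2%N 0%N 1%N * phi 0%N 2%N 1%N - phi 1%N 1%N 1%N * phi 1%N 1%N 1%N) = 0.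
  apply: (eq0_by (c := -1) (H (delta_mx 0 o0) (delta_mx 0 o2)).2).
  by rewrite /Qf /d3 !MphiE !mxE /= hc ht hw; ring.
have E2 : phi 0%N 2%N 1%N * (phi 2%N 0%N 1%N * phi 0%N 2%N 1%N - phi 1%N 1%N 1%N * phi 1%N 1%N 1%N) = 0.
  apply: (eq0_by (c := -1) (H (delta_mx 0 o1) (delta_mx 0 o2)).2).
  by rewrite /Qf /d3 !MphiE !mxE /= hc ht hw; ring.
have E3 : (phi 2%N 0%N 1%N + 2%:R * phi 1%N 1%N 1%N + phi 0%N 2%N 1%N) * (phi 2%N 0%N 1%N * phi 0%N 2%N 1%N - phi 1%N 1%N 1%N * phi 1%N 1%N 1%N) = 0.
  apply: (eq0_by (c := -1) (H (vec3 1 1 0) (delta_mx 0 o2)).2).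
  by rewrite /Qf /d3 !MphiE !mxE /= hc ht hw; ring.
have hq : phi 2%N 0%N 1%N = 0 by move/eqP: E1; rewrite mulf_eq0 (negbTE hd) orbF => /eqP.
have hs : phi 0%N 2%N 1%N = 0 by move/eqP: E2; rewrite mulf_eq0 (negbTE hd) orbF => /eqP.
move/eqP: E3; rewrite mulf_eq0 (negbTE hd) orbF hq hs add0r addr0 mulf_eq0 => /orP E3.
have hm : phi 1%N 1%N 1%N != 0 by apply: contra hd => /eqP hm; rewrite hq hm !mul0r subr0.
have h2 : (2%:R : k) = 0 by case: E3 => /eqP // hm0; rewrite hm0 eqxx in hm.
have hmm : phi 1%N 1%N 1%N * phi 1%N 1%N 1%N != 0 by rewrite mulf_neq0.
have F1 : phi 1%N 1%N 1%N * phi 1%N 1%N 1%N * phi 3%N 0%N 0%N = 0.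
  apply: (eq0_by (c := -1) (H (delta_mx 0 o0) (delta_mx 0 o0)).1).
  by rewrite det3 !MphiE !mxE /= hc ht hw hq hs; ring.
have F2 : phi 1%N 1%N 1%N * phi 1%N 1%N 1%N * phi 0%N 3%N 0%N = 0.
  apply: (eq0_by (c := -1) (H (delta_mx 0 o1) (delta_mx 0 o1)).1).
  by rewrite det3 !MphiE !mxE /= hc ht hw hq hs; ring.
have F3 : phi 1%N 1%N 1%N * phi 1%N 1%N 1%N * phi 2%N 1%N 0%N = 0.
  apply: (eq0_by (c := 1) (H (delta_mx 0 o0) (delta_mx 0 o1)).2).
  by rewrite /Qf /d3 !MphiE !mxE /= hc ht hw hq hs; ring.
have F4 : phi 1%N 1%N 1%N * phi 1%N 1%N 1%N * phi 1%N 2%N 0%N = 0.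
  apply: (eq0_by (c := 1) (H (delta_mx 0 o1) (delta_mx 0 o0)).2).
  by rewrite /Qf /d3 !MphiE !mxE /= hc ht hw hq hs; ring.
split => //; split; exact: (mul0l_nz hmm).
Qed.

Lemma e2_nonzero (k : fieldType) (phi : DUdual3 k) : frameP phi -> Hb phi ->
  phi 2%N 0%N 1%N = 0 -> phi 1%N 1%N 1%N = 0 -> phi 0%N 2%N 1%N = 0 -> False.
Proof.
case=> hc ht hw Hb hq hm hs.
have : Mphi phi (delta_mx 0 o2) = 0.
  apply/matrixP => i j; rewrite [RHS]mxE.
  by case: (ord3_cases i) => ->; case: (ord3_cases j) => ->; rewrite MphiE !mxE /=;
    rewrite ?hc ?ht ?hw ?hq ?hm ?hs; ring.
move/Hb => /(congr1 (fun w : 'rV[k]_3 => w 0 o2)); rewrite !mxE /= => /eqP.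
by rewrite oner_eq0.
Qed.

Lemma step3c (k : fieldType) (phi : DUdual3 k) : frameP phi -> HD phi -> Hb phi ->
  phi 1%N 1%N 1%N = 0 -> phi 0%N 2%N 1%N = 0 -> False.
Proof.
move=> fr H Hb hm hs; have [hc ht hw] := fr.
have hq : phi 2%N 0%N 1%N != 0 by apply/eqP => hq; exact: (e2_nonzero fr Hb hq hm hs).
have hqq : phi 2%N 0%N 1%N * phi 2%N 0%N 1%N != 0 by rewrite mulf_neq0.
have hr : phi 1%N 2%N 0%N = 0.
  apply: (mul0l_nz hqq); apply: (eq0_by (c := -1) (H (delta_mx 0 o0) (delta_mx 0 o0)).1).
  by rewrite det3 !MphiE !mxE /= hc ht hw hm hs; ring.
have hb : phi 0%N 3%N 0%N = 0.
  apply: (mul0l_nz hqq); apply: (eq0_by (c := -1) (H (delta_mx 0 o0) (delta_mx 0 o1)).2).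
  by rewrite /Qf /d3 !MphiE !mxE /= hc ht hw hm hs; ring.
have : Mphi phi (vec3 0 (phi 2%N 0%N 1%N) (- phi 2%N 1%N 0%N)) = 0.
  apply/matrixP => i j; rewrite [RHS]mxE.
  by case: (ord3_cases i) => ->; case: (ord3_cases j) => ->; rewrite MphiE !mxE /=;
    rewrite ?hc ?ht ?hw ?hr ?hm ?hs ?hb; ring.
move/Hb => /(congr1 (fun w : 'rV[k]_3 => w 0 o1)); rewrite !mxE /= => /eqP.
by rewrite (negbTE hq).
Qed.

Ltac tcomp := rewrite /trf /= ?rows3_row0 ?rows3_row1 ?rows3_row2 eval3E !mxE /=.

Lemma step3b (k : fieldType) (phi : DUdual3 k) : frameP phi -> Hb phi ->
  phi 2%N 0%N 1%N * phi 0%N 2%N 1%N - phi 1%N 1%N 1%N * phi 1%N 1%N 1%N = 0 ->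
  exists B : 'M[k]_3, [/\ B \in unitmx, frameP (trf phi B),
     trf phi B 1%N 1%N 1%N = 0 & trf phi B 0%N 2%N 1%N = 0].
Proof.
move=> fr Hb hd; have [hc ht hw] := fr.
case: (eqVneq (phi 1%N 1%N 1%N) 0) => hm.
  case: (eqVneq (phi 2%N 0%N 1%N) 0) => hq.
    case: (eqVneq (phi 0%N 2%N 1%N) 0) => hs.
      by exfalso; exact: (e2_nonzero fr Hb hq hm hs).
    exists (rows3 (delta_mx 0 o1) (vec3 (phi 0%N 2%N 1%N) 0 0) (delta_mx 0 o2)); split.
    - apply: rows3_unit; apply: contra hs => /eqP h; apply/eqP; apply: (eq0_by (c := -1) h).
      by rewrite /d3 !mxE /=; ring.
    - by split; tcomp; rewrite ?hc ?ht ?hw; ring.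
    - by tcomp; rewrite ?hc ?ht ?hw ?hm; ring.
    - by tcomp; rewrite ?hc ?ht ?hw ?hq; ring.
  exists (rows3 (delta_mx 0 o0) (vec3 0 (- phi 2%N 0%N 1%N) 0) (delta_mx 0 o2)); split.
  - apply: rows3_unit; apply: contra hq => /eqP h; apply/eqP; apply: (eq0_by (c := -1) h).
    by rewrite /d3 !mxE /=; ring.
  - by split; tcomp; rewrite ?hc ?ht ?hw; ring.
  - by tcomp; rewrite ?hc ?ht ?hw ?hm; ring.
  - tcomp; rewrite ?hc ?ht ?hw; apply: (eq0_by (c := phi 2%N 0%N 1%N) hd).
    by rewrite hm; ring.
exists (rows3 (delta_mx 0 o1) (vec3 (phi 1%N 1%N 1%N) (- phi 2%N 0%N 1%N) 0) (delta_mx 0 o2)); split.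
- apply: rows3_unit; apply: contra hm => /eqP h; apply/eqP; apply: (eq0_by (c := -1) h).
  by rewrite /d3 !mxE /=; ring.
- by split; tcomp; rewrite ?hc ?ht ?hw; ring.
- by tcomp; rewrite ?hc ?ht ?hw; apply: (eq0_by (c := -1) hd); ring.
- by tcomp; rewrite ?hc ?ht ?hw; apply: (eq0_by (c := phi 2%N 0%N 1%N) hd); ring.
Qed.


Lemma I30 : (0 : 'I_3) = o0. Proof. exact: val_inj. Qed.
Lemma I31 : (1 : 'I_3) = o1. Proof. exact: val_inj. Qed.
Lemma I32 : ((1 : 'I_3) *+ 2) = o2. Proof. exact: val_inj. Qed.

Lemma Hb_of (k : fieldType) (phi : DUdual3 k) :
  (forall l : 'rV[k]_3, l != 0 ->
     exists a b c : nat, (a + b + c = 2)%N /\ contract1 phi l a b c != 0) -> Hb phi.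
Proof.
move=> hb l Ml; apply/eqP; apply/negPn/negP => ln0.
have [a [b [c [habc hne]]]] := hb l ln0.
apply: (negP hne); apply/eqP; rewrite /contract1 I32 I30 I31; clear hne hb.
have E : forall i j, Mphi phi l i j = 0 by move=> i j; rewrite Ml mxE.
case: a habc => [|[|[|a]]]; case: b => [|[|[|b]]]; case: c => [|[|[|c]]] //= _.
- by apply: (eq0_by (c := 1) (E o2 o2)); rewrite MphiE; ring.
- by apply: (eq0_by (c := 1) (E o1 o2)); rewrite MphiE; ring.
- by apply: (eq0_by (c := 1) (E o1 o1)); rewrite MphiE; ring.
- by apply: (eq0_by (c := 1) (E o0 o2)); rewrite MphiE; ring.
- by apply: (eq0_by (c := 1) (E o0 o1)); rewrite MphiE; ring.
- by apply: (eq0_by (c := 1) (E o0 o0)); rewrite MphiE; ring.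
Qed.

Lemma frame_trf (k : fieldType) (phi : DUdual3 k) (B : 'M[k]_3) :
  (forall v, eval3 phi (row o2 B) (row o2 B) v = 0) -> frameP (trf phi B).
Proof.
move=> h; split; rewrite /trf /=; first exact: h.
- by rewrite eval3_sym12 eval3_sym23.
- by rewrite eval3_sym12 eval3_sym23.
Qed.

Lemma xyz_build (k : fieldType) (phi : DUdual3 k) (B1 : 'M[k]_3) :
  B1 \in unitmx ->
  frameP (trf phi B1) -> (trf phi B1) 1%N 1%N 1%N != 0 ->
  [/\ (trf phi B1) 3%N 0%N 0%N = 0, (trf phi B1) 0%N 3%N 0%N = 0, (trf phi B1) 2%N 1%N 0%N = 0 & (trf phi B1) 1%N 2%N 0%N = 0] ->
  (trf phi B1) 2%N 0%N 1%N = 0 -> (trf phi B1) 0%N 2%N 1%N = 0 ->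
  exists Bs : 'M[k]_3, Bs \in unitmx /\ is_xyz_star phi Bs.
Proof.
move=> uB1 [hc ht hw] hm [ha hb hp hr] hq hs.
pose D := rows3 (vec3 ((trf phi B1) 1%N 1%N 1%N)^-1 0 0) (delta_mx 0 o1) (delta_mx 0 o2).
have uD : D \in unitmx.
  apply: rows3_unit; rewrite /d3 !mxE /=.
  by rewrite !(mul0r, mulr0, mulr1, mul1r, subr0, addr0, sub0r, oppr0) invr_eq0.
exists (invmx (D *m B1)^T); split.
  by rewrite unitmx_inv unitmx_tr unitmx_mul uD uB1.
move=> i j l; rewrite invmxK trmxK !row_mul -trf_eval /D; clear uD D.
move: hc ht hw hm ha hb hp hr hq hs; move: (trf phi B1) => psi hc ht hw hm ha hb hp hr hq hs.
by case: (ord3_cases i) => ->; case: (ord3_cases j) => ->; case: (ord3_cases l) => ->;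
  rewrite ?rows3_row0 ?rows3_row1 ?rows3_row2 eval3E !mxE /= ?hc ?ht ?hw ?ha ?hb ?hp ?hr ?hq ?hs;
  field.
Qed.

Unset Implicit Arguments.

Theorem lemma8p2 (k : fieldType) (phi : DUdual3 k) :
  (2 \notin [pchar k] \/
   (2 \in [pchar k] /\ forall Bs : 'M[k]_3, Bs \in unitmx -> ~ is_xyz_star phi Bs)) ->
  (forall l : 'rV[k]_3, l != 0 ->
     exists a b c : nat, (a + b + c = 2)%N /\ contract1 phi l a b c != 0) ->
  exists (X : DU3 k) (y1 y2 y3 : 'rV[k]_3), Gamma phi X y1 y2 y3 != 0.
Proof.
move=> ha hb; apply: NNPP => NG.
have G0 : forall X y1 y2 y3, Gamma phi X y1 y2 y3 = 0.
  move=> X y1 y2 y3; apply: NNPP => hne; apply: NG; exists X, y1, y2, y3; exact/eqP.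
have HDp : HD phi.
  by move=> u v; split; [rewrite -Gamma_det | rewrite -Gamma_Q]; exact: G0.
have Hbp : Hb phi := Hb_of hb.
have [w0 [nz hw0]] := find_w0 HDp Hbp.
have [B1 [uB1 rB1]] := frame nz.
have fr1 : frameP (trf phi B1) by apply: frame_trf; rewrite rB1.
have HD1 := HD_trf B1 HDp.
have Hb1 := Hb_trf uB1 Hbp.
case: (eqVneq (trf phi B1 2%N 0%N 1%N * trf phi B1 0%N 2%N 1%N
               - trf phi B1 1%N 1%N 1%N * trf phi B1 1%N 1%N 1%N) 0) => hd.
  have [B2 [uB2 fr2 hm2 hs2]] := step3b fr1 Hb1 hd.
  exact: (step3c fr2 (HD_trf B2 HD1) (Hb_trf uB2 Hb1) hm2 hs2).
have [h2 hm habpr [hq hs]] := step3a fr1 HD1 hd.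
case: ha => [nch|[_ nxyz]].
  by apply: (negP nch); rewrite inE /= h2 eqxx.
have [Bs [uBs xs]] := xyz_build uB1 fr1 hm habpr hq hs.
exact: (nxyz Bs uBs xs).
Qed.
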